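(* Let $I_1,I_2,I_3\ge2$ and $R\ge1$. If the real $R$-term CPD of $I_1\times I_2\times I_3$ tensors is generically unique, then the $R$-term additive polynomial model $(\mu_R,\Theta_1^R)$ with $\Theta_1=\mathbb{R}^{I_1+I_2+I_3-2}$ and base map $$\mu_1(\lambda,\underline{\mathbf{a}},\underline{\mathbf{b}},\underline{\mathbf{c}})=\mathrm{vec}\Big(\lambda\begin{bmatrix}\underline{\mathbf{a}}\\1\end{bmatrix}\circ\begin{bmatrix}\underline{\mathbf{b}}\\1\end{bmatrix}\circ\begin{bmatrix}\underline{\mathbf{c}}\\1\end{bmatrix}\Big),\qquad \lambda\in\mathbb{R},\ \underline{\mathbf{a}}\in\mathbb{R}^{I_1-1},\ \underline{\mathbf{b}}\in\mathbb{R}^{I_2-1},\ \underline{\mathbf{c}}\in\mathbb{R}^{I_3-1},$$ is identifiable.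
   Context: Generic uniqueness of the real $R$-term CPD: for all $(\boldsymbol\lambda,\mathbf{A},\mathbf{B},\mathbf{C})\in\mathbb{R}^R\times\mathbb{R}^{I_1\times R}\times\mathbb{R}^{I_2\times R}\times\mathbb{R}^{I_3\times R}$ outside a Lebesgue-null set, every other $R$-term decomposition of $\sum_r\lambda_r\mathbf{a}_r\circ\mathbf{b}_r\circ\mathbf{c}_r$ is obtained by permutation of terms and rescaling of the factors within each term. Additive model: given a base polynomial map $\mu_1:\Theta_1\to\mathbb{R}^S$, the $R$-term model is $\mu_R(\theta_1,\dots,\theta_R)=\mu_1(\theta_1)+\cdots+\mu_1(\theta_R)$ on $\Theta_1^R$. It is identifiable if for all $\theta\in\Theta_1^R$ outside a Lebesgue-null set, every $\theta'\in\Theta_1^R$ with $\mu_R(\theta')=\mu_R(\theta)$ is obtained from $\theta$ by permuting the blocks $\theta_r$ and replacing blocks by $\theta'_r$ with $\mu_1(\theta'_r)=\mu_1(\theta_r)$. *)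

(* Defs.v *)
From HB Require Import structures.
From mathcomp Require Import all_boot all_order all_algebra all_fingroup.
From mathcomp Require Import reals.
Set Implicit Arguments. Unset Strict Implicit. Unset Printing Implicit Defensive.
Import Order.TTheory GRing.Theory Num.Theory.
Local Open Scope ring_scope.

Section Defs.
Variable R : realType.

Definition lebesgue_null (X : finType) (S : (X -> R) -> Prop) : Prop :=
  forall eps : R, 0 < eps ->
  exists a b : nat -> X -> R,
    (forall n x, a n x <= b n x) /\
    (forall p, S p -> exists n, forall x, a n x <= p x <= b n x) /\
    (forall N : nat, \sum_(n < N) \prod_(x : X) (b n x - a n x) < eps).

Definition generically (X : finType) (P : (X -> R) -> Prop) : Prop :=
  exists N : (X -> R) -> Prop, lebesgue_null N /\ (forall p, ~ N p -> P p).

(* Coordinates of (lambda, A, B, C) in R^Rk x R^{I1 x Rk} x R^{I2 x Rk} x R^{I3 x Rk}. *)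
Definition cpd_coord (I1 I2 I3 Rk : nat) : finType :=
  ((('I_Rk + ('I_Rk * 'I_I1)) + ('I_Rk * 'I_I2)) + ('I_Rk * 'I_I3))%type.

Definition cpd_tensor (I1 I2 I3 Rk : nat) (lam : 'I_Rk -> R)
  (A : 'I_Rk -> 'I_I1 -> R) (B : 'I_Rk -> 'I_I2 -> R) (C : 'I_Rk -> 'I_I3 -> R)
  (i : 'I_I1) (j : 'I_I2) (k : 'I_I3) : R :=
  \sum_(r < Rk) lam r * A r i * B r j * C r k.

Definition cpd_perm_scale (I1 I2 I3 Rk : nat)
  (lam : 'I_Rk -> R) (A : 'I_Rk -> 'I_I1 -> R) (B : 'I_Rk -> 'I_I2 -> R) (C : 'I_Rk -> 'I_I3 -> R)
  (lam' : 'I_Rk -> R) (A' : 'I_Rk -> 'I_I1 -> R) (B' : 'I_Rk -> 'I_I2 -> R) (C' : 'I_Rk -> 'I_I3 -> R)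
  : Prop :=
  exists s : 'S_Rk, forall r : 'I_Rk,
    exists d al be ga : R,
      [/\ d != 0, al != 0, be != 0, ga != 0 & d * al * be * ga = 1] /\
      [/\ lam' (s r) = d * lam r,
          (forall i, A' (s r) i = al * A r i),
          (forall j, B' (s r) j = be * B r j) &
          (forall k, C' (s r) k = ga * C r k)].

Definition cpd_generically_unique (I1 I2 I3 Rk : nat) : Prop :=
  generically (X := cpd_coord I1 I2 I3 Rk) (fun th =>
    let lam := fun r => th (inl (inl (inl r))) in
    let A := fun r i => th (inl (inl (inr (r, i)))) in
    let B := fun r j => th (inl (inr (r, j))) in
    let C := fun r k => th (inr (r, k)) in
    forall (lam' : 'I_Rk -> R) (A' : 'I_Rk -> 'I_I1 -> R)
           (B' : 'I_Rk -> 'I_I2 -> R) (C' : 'I_Rk -> 'I_I3 -> R),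
      (forall i j k, cpd_tensor lam' A' B' C' i j k = cpd_tensor lam A B C i j k) ->
      cpd_perm_scale lam A B C lam' A' B' C').

Definition block (X1 : finType) (Rk : nat) (th : 'I_Rk * X1 -> R) (r : 'I_Rk)
  : X1 -> R := fun x => th (r, x).

Definition muR (X1 : finType) (V : zmodType) (mu1 : (X1 -> R) -> V) (Rk : nat)
  (th : 'I_Rk * X1 -> R) : V := \sum_(r < Rk) mu1 (block th r).

(* Theta_1^Rk has coordinates 'I_Rk * X1 (block r = theta_r). *)
Definition additive_identifiable (X1 : finType) (V : zmodType)
  (mu1 : (X1 -> R) -> V) (Rk : nat) : Prop :=
  generically (X := ('I_Rk * X1)%type) (fun th =>
    forall th' : 'I_Rk * X1 -> R, muR mu1 th' = muR mu1 th ->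
      exists s : 'S_Rk, forall r : 'I_Rk,
        mu1 (block th' (s r)) = mu1 (block th r)).

(* Theta_1 = R^(1 + (I1-1) + (I2-1) + (I3-1)) = R^(I1+I2+I3-2), coordinates
   (lambda, a_, b_, c_). *)
Definition theta1_coord (I1 I2 I3 : nat) : finType :=
  (((unit + 'I_I1.-1) + 'I_I2.-1) + 'I_I3.-1)%type.

(* [v; 1] : append a final coordinate equal to 1. *)
Definition ext1 (n : nat) (v : 'I_n.-1 -> R) (i : 'I_n) : R :=
  match (insub (val i) : option 'I_n.-1) with Some j => v j | None => 1 end.

(* vec : the entries of an I1 x I2 x I3 tensor listed along a fixed
   enumeration of the index triples. *)
Definition vec3 (I1 I2 I3 : nat) (T : 'I_I1 -> 'I_I2 -> 'I_I3 -> R)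
  : 'rV[R]_(#|{: 'I_I1 * 'I_I2 * 'I_I3}|) :=
  \row_k (let: (i, j, l) := enum_val k in T i j l).

Definition mu1_cpd (I1 I2 I3 : nat) (th : theta1_coord I1 I2 I3 -> R)
  : 'rV[R]_(#|{: 'I_I1 * 'I_I2 * 'I_I3}|) :=
  let lam := th (inl (inl (inl tt))) in
  let a := ext1 (n := I1) (fun i => th (inl (inl (inr i)))) in
  let b := ext1 (n := I2) (fun j => th (inl (inr j))) in
  let c := ext1 (n := I3) (fun k => th (inr k)) in
  vec3 (fun i j k => lam * a i * b j * c k).

End Defs.

(* Main.v *)
Require Import Defs.
From HB Require Import structures.
From mathcomp Require Import all_boot all_order all_algebra all_fingroup.
From mathcomp Require Import reals.
From mathcomp Require Import all_classical all_reals all_analysis measurable_realfun.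
From mathcomp Require Import ring lra zify.
Set Implicit Arguments. Unset Strict Implicit. Unset Printing Implicit Defensive.
Import Order.TTheory GRing.Theory Num.Theory.
Import numFieldNormedType.Exports.
Local Open Scope ring_scope.

Section OneD.
Local Open Scope classical_set_scope.
Local Open Scope ring_scope.

Lemma exists_t (R : realType) (w a b : nat -> R) (dl : R) :
 0 < dl -> (forall n, 0 <= w n) -> (forall n, a n <= b n) ->
 (forall N, \sum_(n < N) w n * (b n - a n) < dl) ->
 exists t : R, (1 <= t <= 2) /\ forall N : nat,
   \sum_(n < N) (if (a n <= t) && (t <= b n) then w n else 0) <= 2 * dl.
Proof.
move=> dl0 w0 ab Hs.
apply: contrapT => Hn.
have Ht : forall t : R, 1 <= t <= 2 -> exists N : nat,
   2 * dl < \sum_(n < N) (if (a n <= t) && (t <= b n) then w n else 0).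
  move=> t t12; apply: contrapT => HN; apply: Hn; exists t; split => // N.
  by rewrite leNgt; apply/negP => H; apply: HN; exists N.
pose D : set R := `[1, 2]%classic.
have mD : measurable D by exact: measurable_itv.
pose f := fun n (t : R) => (w n * \1_(`[a n, b n]%classic) t)%:E.
have f0 : forall n t, D t -> (0 <= f n t)%E.
  by move=> n t _; rewrite lee_fin mulr_ge0.
have mf : forall n, measurable_fun D (fun t : R => f n t).
  move=> n; apply/measurable_EFinP; apply: measurable_funM => //.
have key1 : forall t, D t -> ((2 * dl)%:E <= \sum_(n <oo) f n t)%E.
  move=> t Dt; have [N HN] : exists N : nat,
     2 * dl < \sum_(n < N) (if (a n <= t) && (t <= b n) then w n else 0).
    by apply: Ht; move: Dt; rewrite /D /= in_itv.
  apply: le_trans (@nneseries_lim_ge R (fun n => f n t) xpredT 0%N N (fun n _ _ => f0 n t Dt)).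
  rewrite big_mkord sumEFin lee_fin; apply/ltW/(lt_le_trans HN)/ler_sum => n _.
  rewrite /indic; case: ifP => /andP H.
    rewrite mem_set ?mulr1 //=; rewrite in_itv /=; exact/andP.
  rewrite memNset ?mulr0 //= in_itv /=; by move=> /andP.
have key2 : forall n, (\int[lebesgue_measure]_(x in D) f n x <= (w n * (b n - a n))%:E)%E.
  move=> n.
  have m1 : measurable (`[a n, b n]%classic : set R) := measurable_itv _.
  rewrite /f (@integralZl_indic _ _ _ lebesgue_measure D mD (fun=> `[a n, b n]%classic) (w n)) //; last first.
    by rewrite ltNge w0.
  rewrite integral_indic //.
  rewrite EFinM lee_wpmul2l ?lee_fin //.
  apply: (le_trans (@measureIl _ _ _ lebesgue_measure _ D (measurable_itv _) mD)).
  have H := lebesgue_measure_itv `[a n, b n]; rewrite /= lte_fin in H.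
  case: ltP H => hab H.
    rewrite le_eqVlt; apply/orP; left; apply/eqP; rewrite EFinB; exact: H.
  have hab' : a n = b n by apply/le_anti; rewrite hab ab.
  rewrite hab' subrr.
  rewrite le_eqVlt; apply/orP; left; apply/eqP; rewrite hab' in H; exact: H.
have Hint := integral_nneseries lebesgue_measure mD mf f0.
have : ((2 * dl)%:E <= \int[lebesgue_measure]_(x in D) \sum_(n <oo) f n x)%E.
  have L : (\int[lebesgue_measure]_(x in D) (cst (2*dl)%:E) x <=
     \int[lebesgue_measure]_(x in D) (\sum_(n <oo) f n x))%E.
    apply: ge0_le_integral => //.
    - by move=> x _; rewrite lee_fin mulr_ge0 // ltW.
    - apply: (@ge0_emeasurable_sum _ _ _ D f xpredT) => //; by move=> k x Dx _; apply: f0.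
  apply: le_trans L.
  have H := lebesgue_measure_itv (R:=R) `[1, 2].
  rewrite integral_cst //.
  move: H; rewrite /= lte_fin ltr1n => H.
  rewrite [X in (_ * X)%E](_ : _ = 1%:E) ?mule1 //.
  apply: (etrans H); rewrite /=; congr EFin; lra.
move=> H2.
have H2' : ((2 * dl)%:E <= \sum_(n <oo) \int[lebesgue_measure]_(x in D) f n x)%E.
  apply: (le_trans H2); rewrite le_eqVlt; apply/orP; left; apply/eqP; exact: Hint.
have H3 : (\sum_(n <oo) \int[lebesgue_measure]_(x in D) f n x <= dl%:E)%E.
  apply: lime_le.
    apply: is_cvg_nneseries => k _ _; apply: integral_ge0 => x Dx; exact: f0.
  near=> N; apply: le_trans (_ : (\sum_(0 <= k < N) (w k * (b k - a k))%:E <= _)%E).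
    by apply: lee_sum => k _; apply: key2.
  by rewrite sumEFin lee_fin big_mkord ltW.
have := le_trans H2' H3; rewrite lee_fin; lra.
Unshelve. all: by end_near.
Qed.

End OneD.

Definition lnull_on (R : realType) (X : finType) (K : pred X) (S : (X -> R) -> Prop) :=
  forall eps : R, 0 < eps -> exists a b : nat -> X -> R,
    (forall n x, a n x <= b n x) /\
    (forall p, S p -> exists n, forall x, K x -> a n x <= p x <= b n x) /\
    (forall N : nat, \sum_(n < N) \prod_(x | K x) (b n x - a n x) < eps).

Lemma lnull_on_step (R : realType) (X : finType) (K : pred X) (x0 x1 : X)
  (c : X -> R -> R) (S E : (X -> R) -> Prop) :
  ~~ K x0 -> K x1 ->
  (forall x t, 1 <= t <= 2 -> 2^-1 <= c x t <= 2) ->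
  (forall z t, S z -> 1 <= t <= 2 ->
     exists z', E z' /\ z' x0 = t /\ forall x, K x -> z' x = c x t * z x) ->
  lnull_on [pred x | (x == x0) || K x] E -> lnull_on K S.
Proof.
move=> Kx0 Kx1 cb Hz HE eps eps0.
pose M : R := \prod_(x | K x) 2.
have M0 : 0 < M by apply: prodr_gt0 => x _; lra.
pose dl := eps / (4 * M).
have dl0 : 0 < dl by apply: divr_gt0 => //; rewrite mulr_gt0.
have [a [b [ab [cov vol]]]] := HE dl dl0.
pose w n := \prod_(x | K x) (b n x - a n x).
have w0 : forall n, 0 <= w n by move=> n; apply: prodr_ge0 => x _; rewrite subr_ge0.
have Hs : forall N, \sum_(n < N) w n * (b n x0 - a n x0) < dl.
  move=> N; apply: le_lt_trans (vol N); rewrite le_eqVlt; apply/orP; left; apply/eqP.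
  apply: eq_bigr => n _; rewrite [RHS](bigD1 x0) /=; last by rewrite eqxx.
  rewrite mulrC; congr (_ * _); apply: eq_bigl => x /=.
  by case: (eqVneq x x0) => [->|]; rewrite ?(negbTE Kx0) ?andbF ?andbT.
have [t [t12 Ht]] := exists_t dl0 w0 (fun n => ab n x0) Hs.
pose hit n := (a n x0 <= t) && (t <= b n x0).
have c0 : forall x, 0 < c x t by move=> x; have := cb x t t12; lra.
exists (fun n x => if hit n && K x then a n x / c x t else 0).
exists (fun n x => if hit n && K x then b n x / c x t else 0).
split; [|split].
- move=> n x; case: ifP => // _; rewrite ler_pM2r ?invr_gt0 //.
- move=> p Sp; have [z' [Ez' [z'x0 z'K]]] := Hz p t Sp t12.
  have [n Hn] := cov z' Ez'; exists n => x Kx.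
  have hn : hit n by rewrite /hit -z'x0; apply: Hn; rewrite /= eqxx.
  rewrite hn Kx /=; have := Hn x; rewrite /= Kx orbT => /(_ isT).
  rewrite z'K // => /andP [h1 h2].
  by rewrite !ler_pdivrMr ?ler_pdivlMr // ?[p x * _]mulrC h1 h2.
- move=> N.
  have H2 : M * (2 * dl) < eps.
    rewrite /dl; have -> : M * (2 * (eps / (4 * M))) = eps / 2.
      by field; apply: lt0r_neq0.
    lra.
  have H3 : \sum_(n < N) M * (if hit n then w n else 0) <= M * (2 * dl).
    by rewrite -mulr_sumr; apply: ler_wpM2l; [exact: ltW|exact: Ht].
  apply: le_lt_trans H2; apply: le_trans H3.
    apply: ler_sum => n _; case hn: (hit n) => /=.
      rewrite /M /w -big_split /=; apply: ler_prod => x Kx.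
      rewrite Kx /=; rewrite -mulrBl; apply/andP; split.
        by rewrite mulr_ge0 ?subr_ge0 // ?ler_pM2r ?invr_ge0 ?ltW //.
      rewrite mulrC ler_wpM2r ?subr_ge0 //; have := cb x t t12 => /andP[h _].
      by rewrite invf_ple ?posrE ?c0 //.
    by rewrite (bigD1 x1) //= subrr !mul0r mulr0.
Qed.

Section Main.
Variables (R : realType) (I1 I2 I3 Rk : nat).

Local Notation X := (cpd_coord I1 I2 I3 Rk).
Local Notation XT := ((('I_Rk + ('I_Rk * 'I_I1)) + ('I_Rk * 'I_I2)) + ('I_Rk * 'I_I3))%type.

Definition good (th : X -> R) : Prop :=
    let lam := fun r => th (inl (inl (inl r))) in
    let A := fun r i => th (inl (inl (inr (r, i)))) in
    let B := fun r j => th (inl (inr (r, j))) in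
    let C := fun r k => th (inr (r, k)) in
    forall (lam' : 'I_Rk -> R) (A' : 'I_Rk -> 'I_I1 -> R)
           (B' : 'I_Rk -> 'I_I2 -> R) (C' : 'I_Rk -> 'I_I3 -> R),
      (forall i j k, cpd_tensor lam' A' B' C' i j k = cpd_tensor lam A B C i j k) ->
      cpd_perm_scale lam A B C lam' A' B' C'.

Lemma cpd_gu_good : cpd_generically_unique R I1 I2 I3 Rk = generically (X := X) good.
Proof. by []. Qed.

Lemma good_scale (f0 f1 f2 f3 : 'I_Rk -> R) (z z' : X -> R) :
  (forall r, f0 r * f1 r * f2 r * f3 r = 1) ->
  (forall r, z' (inl (inl (inl r))) = f0 r * z (inl (inl (inl r)))) ->
  (forall r i, z' (inl (inl (inr (r, i)))) = f1 r * z (inl (inl (inr (r, i))))) ->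
  (forall r j, z' (inl (inr (r, j))) = f2 r * z (inl (inr (r, j)))) ->
  (forall r k, z' (inr (r, k)) = f3 r * z (inr (r, k))) ->
  good z -> good z'.
Proof.
move=> hf h0 h1 h2 h3 gz; rewrite /good; cbv zeta; move=> lam' A' B' C' Heq.
have [s Hs] : cpd_perm_scale (fun r => z (inl (inl (inl r))))
   (fun r i => z (inl (inl (inr (r, i))))) (fun r j => z (inl (inr (r, j))))
   (fun r k => z (inr (r, k))) lam' A' B' C'.
  apply: gz => i j k; rewrite Heq /cpd_tensor; apply: eq_bigr => r _.
  rewrite h0 h1 h2 h3.
  have := hf r; move=> e.
  transitivity ((f0 r * f1 r * f2 r * f3 r) * (z (inl (inl (inl r))) * z (inl (inl (inr (r, i))))
      * z (inl (inr (r, j))) * z (inr (r, k)))); first by ring.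
  by rewrite e mul1r.
exists s => r; have [d [al [be [ga [[d0 al0 be0 ga0 p1] [e0 e1 e2 e3]]]]]] := Hs r.
have F := hf r.
have nz : forall x : R, x * (d * al * be * ga) * (f0 r * f1 r * f2 r * f3 r) = x.
  by move=> x; rewrite p1 F !mulr1.
exists (d * (f1 r * f2 r * f3 r)), (al * (f0 r * f2 r * f3 r)),
  (be * (f0 r * f1 r * f3 r)), (ga * (f0 r * f1 r * f2 r)).
have fnz : [/\ f0 r != 0, f1 r != 0, f2 r != 0 & f3 r != 0].
  split; apply/eqP => h; move: F; rewrite h ?mulr0 ?mul0r => /eqP; by rewrite eq_sym oner_eq0.
case: fnz => n0 n1 n2 n3.
split.
  split; rewrite ?mulf_neq0 //.
  transitivity ((d * al * be * ga) * (f0 r * f1 r * f2 r * f3 r) ^+ 3); first by ring.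
  by rewrite p1 F expr1n mulr1.
split.
- rewrite e0 h0; transitivity (d * (f0 r * f1 r * f2 r * f3 r) * z (inl (inl (inl r)))); last by ring.
  by rewrite F mulr1.
- move=> i; rewrite e1 h1; transitivity (al * (f0 r * f1 r * f2 r * f3 r) * z (inl (inl (inr (r, i))))); last by ring.
  by rewrite F mulr1.
- move=> j; rewrite e2 h2; transitivity (be * (f0 r * f1 r * f2 r * f3 r) * z (inl (inr (r, j)))); last by ring.
  by rewrite F mulr1.
- move=> k; rewrite e3 h3; transitivity (ga * (f0 r * f1 r * f2 r * f3 r) * z (inr (r, k))); last by ring.
  by rewrite F mulr1.
Qed.

End Main.

Lemma lnull_on_ext (R : realType) (X : finType) (K K' : pred X) (E E' : (X -> R) -> Prop) :
  lnull_on K E -> K =1 K' -> (forall z, E' z -> E z) -> lnull_on K' E'.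
Proof.
move=> H KK EE eps e0; have [a [b [ab [cov vol]]]] := H eps e0.
exists a, b; split => //; split.
  by move=> p /EE /cov [n Hn]; exists n => x; rewrite -KK; apply: Hn.
by move=> N; under eq_bigr do under eq_bigl do rewrite -KK; exact: vol.
Qed.

Section Main2.
Variables (R : realType) (I1 I2 I3 Rk : nat).
Hypotheses (h1 : (2 <= I1)%N) (h2 : (2 <= I2)%N) (h3 : (2 <= I3)%N) (hR : (1 <= Rk)%N).

Local Notation X := (cpd_coord I1 I2 I3 Rk).

Let lt1 : (I1.-1 < I1)%N. Proof. by rewrite ltn_predL; apply: leq_trans h1. Qed.
Let lt2 : (I2.-1 < I2)%N. Proof. by rewrite ltn_predL; apply: leq_trans h2. Qed.
Let lt3 : (I3.-1 < I3)%N. Proof. by rewrite ltn_predL; apply: leq_trans h3. Qed.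

Definition lastc (p : 'I_3 * 'I_Rk) : X :=
  if val p.1 == 0%N then inl (inl (inr (p.2, Ordinal lt1)))
  else if val p.1 == 1%N then inl (inr (p.2, Ordinal lt2))
  else inr (p.2, Ordinal lt3).

Definition isBase (x : X) : bool :=
  match x with
  | inl (inl (inl _)) => true
  | inl (inl (inr (_, i))) => val i != I1.-1
  | inl (inr (_, j)) => val j != I2.-1
  | inr (_, k) => val k != I3.-1
  end.

Definition fac (p : 'I_3 * 'I_Rk) (u : R) (x : X) : R :=
  match x with
  | inl (inl (inl r)) => if r == p.2 then u^-1 else 1
  | inl (inl (inr (r, _))) => if (val p.1 == 0%N) && (r == p.2) then u else 1
  | inl (inr (r, _)) => if (val p.1 == 1%N) && (r == p.2) then u else 1
  | inr (r, _) => if (val p.1 == 2%N) && (r == p.2) then u else 1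
  end.

Lemma good_fac (p : 'I_3 * 'I_Rk) (u : R) (z z' : X -> R) : u != 0 ->
  (forall x, z' x = fac p u x * z x) -> good z -> good z'.
Proof.
move=> u0 hz; apply: (@good_scale R I1 I2 I3 Rk
  (fun r => if r == p.2 then u^-1 else 1)
  (fun r => if (val p.1 == 0%N) && (r == p.2) then u else 1)
  (fun r => if (val p.1 == 1%N) && (r == p.2) then u else 1)
  (fun r => if (val p.1 == 2%N) && (r == p.2) then u else 1)) => //.
move=> r; case: (r == p.2); rewrite ?andbT ?andbF ?mulr1 //.
case: p.1 => [[|[|[|m]]] hm] //=; rewrite ?mulr1 ?mul1r ?mulVf //.
Qed.

Lemma fac_inv (p : 'I_3 * 'I_Rk) (u : R) (x : X) : u != 0 ->
  fac p u^-1 x * fac p u x = 1.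
Proof.
move=> u0; case: x => [[[r|[r i]]|[r j]]|[r k]] /=;
  repeat case: ifP => _; rewrite ?mulr1 ?mul1r ?invrK ?mulVf ?mulfV //.
Qed.

Lemma fac_bound (p : 'I_3 * 'I_Rk) (t : R) (x : X) : 1 <= t <= 2 ->
  2^-1 <= fac p t x <= 2.
Proof.
move=> /andP [t1 t2].
have tp : 0 < t by lra.
have : 2^-1 <= t^-1 <= 2.
  have ti : t^-1 <= 1 by rewrite invf_le1.
  apply/andP; split; last lra.
  by rewrite lef_pV2 ?posrE //; lra.
move=> /andP [i1 i2].
case: x => [[[r|[r i]]|[r j]]|[r k]] /=; repeat case: ifP => _; apply/andP; split => //; lra.
Qed.

Lemma fac_lastc (p q : 'I_3 * 'I_Rk) (t : R) :
  fac p t (lastc q) = if q == p then t else 1.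
Proof.
case: q => [[[|[|[|m]]] hq] rq]; case: p => [[[|[|[|m']]] hp] rp] //=;
  rewrite /lastc /= -pair_eqE /= ?andbT ?andbF //.
Qed.

Lemma isBase_lastc p : isBase (lastc p) = false.
Proof. by case: p => [[[|[|[|m]]] hq] rq] //=; rewrite /lastc /= eqxx. Qed.

Lemma lastc_inj : injective lastc.
Proof.
move=> q p e; have := fac_lastc p q (2:R); rewrite e fac_lastc eqxx.
by case: (q =P p) => // _ h; exfalso; clear e; lra.
Qed.

Definition Kof (l : seq ('I_3 * 'I_Rk)) : pred X :=
  [pred x | isBase x || (x \in map lastc l)].
Definition Eof (l : seq ('I_3 * 'I_Rk)) (z : X -> R) : Prop :=
  ~ good z /\ forall p, p \notin l -> z (lastc p) = 1.

Lemma down (l : seq ('I_3 * 'I_Rk)) : uniq l ->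
  lnull_on (Kof l) (Eof l) -> lnull_on (Kof [::]) (Eof [::]).
Proof.
elim: l => [//| p l IH] /= /andP [pl ul] H; apply: IH ul _.
pose r0 : 'I_Rk := Ordinal hR.
apply: (lnull_on_step (K := Kof l) (x0 := lastc p) (x1 := inl (inl (inl r0)) : X) (c := fun x t => fac p t x) (S := Eof l) (E := Eof (p :: l))).
- by rewrite /Kof /= isBase_lastc /= mem_map //; exact: lastc_inj.
- by [].
- by move=> x t; apply: fac_bound.
- move=> z t [nz hz] t12; exists (fun x => fac p t x * z x).
  have t0 : t != 0 by apply/eqP => t0; move: t12; rewrite t0; lra.
  split; [split|split].
  + move=> gz'; apply: nz; apply: (good_fac (p := p) (u := t^-1)) gz'; first by rewrite invr_eq0.
    by move=> x; rewrite mulrA (fac_inv p x t0) mul1r.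
  + move=> q; rewrite inE negb_or => /andP [qp ql].
    by rewrite hz // fac_lastc (negbTE qp) mulr1.
  + by rewrite fac_lastc eqxx hz // mulr1.
  + by [].
- apply: lnull_on_ext H _ _ => //.
  move=> x; rewrite /Kof /= inE.
  by case: (isBase x); case: (x == lastc p); case: (x \in map lastc l).
Qed.
End Main2.

Section Main3.
Variables (R : realType) (I1 I2 I3 Rk : nat).

Local Notation X := (cpd_coord I1 I2 I3 Rk).
Local Notation Y := ('I_Rk * theta1_coord I1 I2 I3)%type.

Definition phi (th : Y -> R) (x : X) : R :=
  match x with
  | inl (inl (inl r)) => th (r, inl (inl (inl tt)))
  | inl (inl (inr (r, i))) => ext1 (fun i' => th (r, inl (inl (inr i')))) i
  | inl (inr (r, j)) => ext1 (fun j' => th (r, inl (inr j'))) j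
  | inr (r, k) => ext1 (fun k' => th (r, inr k')) k
  end.

Lemma muR_entry (th : Y -> R) i j k :
  (muR (@mu1_cpd R I1 I2 I3) th) 0 (enum_rank (i, j, k)) =
  cpd_tensor (fun r => phi th (inl (inl (inl r))))
    (fun r i => phi th (inl (inl (inr (r, i)))))
    (fun r j => phi th (inl (inr (r, j))))
    (fun r k => phi th (inr (r, k))) i j k.
Proof.
rewrite /muR summxE; apply: eq_bigr => r _.
by rewrite /mu1_cpd /vec3 mxE enum_rankK.
Qed.

Lemma good_add (th : Y -> R) : good (phi th) ->
  forall th' : Y -> R, muR (@mu1_cpd R I1 I2 I3) th' = muR (@mu1_cpd R I1 I2 I3) th ->
      exists s : 'S_Rk, forall r : 'I_Rk,
        @mu1_cpd R I1 I2 I3 (block th' (s r)) = @mu1_cpd R I1 I2 I3 (block th r).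
Proof.
move=> g th' Heq.
have T : forall i j k, cpd_tensor (fun r => phi th' (inl (inl (inl r))))
    (fun r i => phi th' (inl (inl (inr (r, i)))))
    (fun r j => phi th' (inl (inr (r, j))))
    (fun r k => phi th' (inr (r, k))) i j k =
  cpd_tensor (fun r => phi th (inl (inl (inl r))))
    (fun r i => phi th (inl (inl (inr (r, i)))))
    (fun r j => phi th (inl (inr (r, j))))
    (fun r k => phi th (inr (r, k))) i j k.
  by move=> i j k; rewrite -!muR_entry Heq.
have [s Hs] := g _ _ _ _ T.
exists s => r; have [d [al [be [ga [[d0 al0 be0 ga0 p1] [e0 e1 e2 e3]]]]]] := Hs r.
apply/rowP => k; rewrite !mxE; case: (enum_val k) => [[i j] l].
have e0' : phi th' (inl (inl (inl (s r)))) = d * phi th (inl (inl (inl r))) := e0.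
have e1' : phi th' (inl (inl (inr (s r, i)))) = al * phi th (inl (inl (inr (r, i)))) := e1 i.
have e2' : phi th' (inl (inr (s r, j))) = be * phi th (inl (inr (r, j))) := e2 j.
have e3' : phi th' (inr (s r, l)) = ga * phi th (inr (r, l)) := e3 l.
have E : phi th' (inl (inl (inl (s r)))) * phi th' (inl (inl (inr (s r, i))))
   * phi th' (inl (inr (s r, j))) * phi th' (inr (s r, l)) =
   phi th (inl (inl (inl r))) * phi th (inl (inl (inr (r, i))))
   * phi th (inl (inr (r, j))) * phi th (inr (r, l)).
  rewrite e0' e1' e2' e3'.
  transitivity ((d * al * be * ga) * (phi th (inl (inl (inl r))) * phi th (inl (inl (inr (r, i))))
   * phi th (inl (inr (r, j))) * phi th (inr (r, l)))); first by ring.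
  by rewrite p1 mul1r.
exact: E.
Qed.

End Main3.

Lemma transfer (R : realType) (X Y : finType) (iotaY : Y -> X) (K : pred X)
  (E : (X -> R) -> Prop) (S : (Y -> R) -> Prop) (y0 : Y) :
  injective iotaY -> (forall x, K x -> exists y, iotaY y = x) -> (forall y, K (iotaY y)) ->
  (forall th, S th -> exists z, E z /\ forall y, z (iotaY y) = th y) ->
  lnull_on K E -> lebesgue_null S.
Proof.
move=> inj sur Ki SE H eps e0; have [a [b [ab [cov vol]]]] := H eps e0.
exists (fun n y => a n (iotaY y)), (fun n y => b n (iotaY y)); split => //; split.
  move=> th /SE [z [Ez zi]]; have [n Hn] := cov z Ez; exists n => y.
  by rewrite -zi; apply: Hn.
move=> N; apply: le_lt_trans (vol N); rewrite le_eqVlt; apply/orP; left; apply/eqP.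
apply: eq_bigr => n _.
pose h' := fun x => odflt y0 [pick y | iotaY y == x].
have hc : forall x, K x -> iotaY (h' x) = x.
  move=> x /sur [y <-]; rewrite /h'; case: pickP => [y' /eqP //|/(_ y)].
  by rewrite eqxx.
rewrite (reindex_onto iotaY h' hc); apply: eq_bigl => y; rewrite Ki /=.
rewrite /h'; case: pickP => [y' /eqP /inj -> //|/(_ y)]; by rewrite eqxx.
Qed.

Lemma null_lnull (R : realType) (X : finType) (S : (X -> R) -> Prop) :
  lebesgue_null S -> lnull_on predT S.
Proof.
move=> H eps e0; have [a [b [hab [hc hv]]]] := H eps e0.
exists a, b; split => //; split => //.
by move=> p /hc [n Hn]; exists n => x _; exact: Hn x.
Qed.

Lemma gen_of_null (R : realType) (X : finType) (P : (X -> R) -> Prop) :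
  lebesgue_null (fun p => ~ P p) -> generically P.
Proof.
move=> H; exists (fun p => ~ P p); split => // p np.
by apply: contrapT.
Qed.

Section Fin.
Variables (R : realType) (I1 I2 I3 Rk : nat).
Hypotheses (h1 : (2 <= I1)%N) (h2 : (2 <= I2)%N) (h3 : (2 <= I3)%N) (hR : (1 <= Rk)%N).

Local Notation X := (cpd_coord I1 I2 I3 Rk).
Local Notation Y := ('I_Rk * theta1_coord I1 I2 I3)%type.

Definition iotaY (y : Y) : X :=
  match y with (r, c) =>
  match c with
  | inl (inl (inl _)) => inl (inl (inl r))
  | inl (inl (inr i)) => inl (inl (inr (r, widen_ord (leq_pred I1) i)))
  | inl (inr j) => inl (inr (r, widen_ord (leq_pred I2) j))
  | inr k => inr (r, widen_ord (leq_pred I3) k)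
  end end.

Lemma iota_inj : injective iotaY.
Proof.
move=> [r1 c1] [r2 c2].
case: c1 => [[[[]|i1]|j1]|k1]; case: c2 => [[[[]|i2]|j2]|k2] //= [->] //.
  all: by move=> /ord_inj ->.
Qed.

Lemma iota_base y : isBase (iotaY y).
Proof.
case: y => [r [[[[]|i]|j]|k]] //=; rewrite neq_ltn ltn_ord //.
Qed.

Lemma base_iota x : isBase x -> exists y, iotaY y = x.
Proof.
case: x => [[[r|[r i]]|[r j]]|[r k]] /=.
- by move=> _; exists (r, inl (inl (inl tt))).
- move=> hb; have hi : (i < I1.-1)%N by move: (ltn_ord i) hb; clear; lia.
  by exists (r, inl (inl (inr (Ordinal hi)))); congr (inl (inl (inr (_, _)))); apply: val_inj.
- move=> hb; have hi : (j < I2.-1)%N by move: (ltn_ord j) hb; clear; lia.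
  by exists (r, inl (inr (Ordinal hi))); congr (inl (inr (_, _))); apply: val_inj.
- move=> hb; have hi : (k < I3.-1)%N by move: (ltn_ord k) hb; clear; lia.
  by exists (r, inr (Ordinal hi)); congr (inr (_, _)); apply: val_inj.
Qed.

Lemma phi_iota (th : Y -> R) y : phi th (iotaY y) = th y.
Proof.
case: y => [r [[[[]|i]|j]|k]] //=; rewrite /ext1 /= ?valK //.
Qed.

End Fin.

Lemma phi_lastc (R : realType) (I1 I2 I3 Rk : nat) (h1 : (2 <= I1)%N) (h2 : (2 <= I2)%N)
  (h3 : (2 <= I3)%N) (th : 'I_Rk * theta1_coord I1 I2 I3 -> R) p :
  phi th (lastc h1 h2 h3 p) = 1.
Proof.
case: p => [[[|[|[|m]]] hm] r] //=; rewrite /lastc /= /ext1 /= insubF //= ltnn //.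
Qed.

Lemma notbase_lastc (I1 I2 I3 Rk : nat) (h1 : (2 <= I1)%N) (h2 : (2 <= I2)%N)
  (h3 : (2 <= I3)%N) (x : cpd_coord I1 I2 I3 Rk) :
  ~~ isBase x -> exists p, x = lastc h1 h2 h3 p.
Proof.
case: x => [[[r|[r i]]|[r j]]|[r k]] //= /negPn /eqP hb.
- by exists (ord0, r); rewrite /lastc /=; congr (inl (inl (inr (_, _)))); apply: val_inj.
- by exists (Ordinal (isT : (1 < 3)%N), r); rewrite /lastc /=; congr (inl (inr (_, _))); apply: val_inj.
- by exists (Ordinal (isT : (2 < 3)%N), r); rewrite /lastc /=; congr (inr (_, _)); apply: val_inj.
Qed.

Theorem mainTheorem8 (R : realType) (I1 I2 I3 Rk : nat) :
  (2 <= I1)%N -> (2 <= I2)%N -> (2 <= I3)%N -> (1 <= Rk)%N ->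
  cpd_generically_unique R I1 I2 I3 Rk ->
  additive_identifiable (@mu1_cpd R I1 I2 I3) Rk.
Proof.
move=> h1 h2 h3 hR [N [nullN HN]].
apply: gen_of_null.
pose r0 : 'I_Rk := Ordinal hR.
apply: (@transfer R _ _ (@iotaY I1 I2 I3 Rk) (Kof h1 h2 h3 [::]) (Eof h1 h2 h3 [::]) _
          (r0, inl (inl (inl tt)))).
- exact: iota_inj.
- by move=> x; rewrite /Kof /= orbF; apply: base_iota.
- by move=> y; rewrite /Kof /= orbF iota_base.
- move=> th nP; exists (phi th); split; last exact: phi_iota.
  split; last by move=> p _; apply: phi_lastc.
  by move=> g; apply: nP; apply: good_add.
- apply: (down hR (enum_uniq _)).
  apply: lnull_on_ext (null_lnull nullN) _ _.
    move=> x; rewrite /Kof /= ; case hb: (isBase x) => //=.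
    have [p ->] := notbase_lastc h1 h2 h3 (negbT hb).
    by rewrite map_f // mem_enum.
  by move=> z [ng _]; apply: contrapT => nz; exact: ng (HN z nz).
Qed.
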